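(* Let $v\in T_1^\circ$ be a term of size $p$. Then for every $\beta\in B_\bullet$, one has $v(1)\cdot\partial\beta = \partial^p\beta\cdot v(1)$ in $B_\bullet$, where $v(1)$ is the evaluation of $v$ at the identity element $1$ of $B_\bullet$ with respect to the operation $\circ$.
   Context: $T_1^\circ$ is the set of terms in a single variable $x$ built with a binary operator $\circ$; the size of a term is its number of variable occurrences. The group $B_\bullet$ is generated by $\sigma_1,\sigma_2,\dots$ and $a_1,a_2,\dots$ subject to: $\sigma_j\sigma_i=\sigma_i\sigma_j$ and $a_j\sigma_i=\sigma_ia_j$ for $j\ge i+2$; $a_j\sigma_i=\sigma_{i+1}a_j$ and $a_ja_i=a_{i+1}a_j$ for $j\le i-1$; $\sigma_j\sigma_i\sigma_j=\sigma_i\sigma_j\sigma_i$, $\sigma_i\sigma_ja_i=a_j\sigma_i$ and $\sigma_j\sigma_ia_j=a_i\sigma_i$ for $j=i+1$. $\partial$ is the endomorphism of $B_\bullet$ with $\partial\sigma_i=\sigma_{i+1}$, $\partial a_i=a_{i+1}$. The operation $\circ$ on $B_\bullet$ is $\beta\circ\gamma=\beta\cdot\partial\gamma\cdot a_1$; thus $x(1)=1$ and $(v_1\circ v_2)(1)=v_1(1)\cdot\partial v_2(1)\cdot a_1$. *)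

(* Defs.v *)
(* The group B_bullet is given by generators and relations;
   we realise it as words in the generators and their inverses modulo the
   congruence generated by free cancellation and the defining relations.
   Equality in B_bullet is this congruence [beq].
   Index convention: [Sig i] stands for sigma_{i+1}, [A i] for a_{i+1}. *)
From Stdlib Require Import List Arith.
Import ListNotations.

Inductive gen : Type := Sig (i : nat) | A (i : nat).

(* a letter: a generator together with an exponent sign (true = inverse) *)
Definition letter : Type := (gen * bool)%type.
Definition word : Type := list letter.

Definition g (x : gen) : word := [(x, false)].
Definition linv (l : letter) : letter := (fst l, negb (snd l)).

Inductive rel : word -> word -> Prop :=
| rel_ss_far i j : i + 2 <= j -> rel (g (Sig j) ++ g (Sig i)) (g (Sig i) ++ g (Sig j))
| rel_as_far i j : i + 2 <= j -> rel (g (A j) ++ g (Sig i)) (g (Sig i) ++ g (A j))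
| rel_as_low i j : j + 1 <= i -> rel (g (A j) ++ g (Sig i)) (g (Sig (i + 1)) ++ g (A j))
| rel_aa_low i j : j + 1 <= i -> rel (g (A j) ++ g (A i)) (g (A (i + 1)) ++ g (A j))
| rel_braid i : rel (g (Sig (i + 1)) ++ g (Sig i) ++ g (Sig (i + 1)))
                    (g (Sig i) ++ g (Sig (i + 1)) ++ g (Sig i))
| rel_ssa i : rel (g (Sig i) ++ g (Sig (i + 1)) ++ g (A i)) (g (A (i + 1)) ++ g (Sig i))
| rel_ssa' i : rel (g (Sig (i + 1)) ++ g (Sig i) ++ g (A (i + 1))) (g (A i) ++ g (Sig i)).

Inductive basic : word -> word -> Prop :=
| basic_cancel l : basic [l; linv l] []
| basic_rel u v : rel u v -> basic u v.

Inductive beq : word -> word -> Prop :=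
| beq_step u v w w' : basic w w' -> beq (u ++ w ++ v) (u ++ w' ++ v)
| beq_refl w : beq w w
| beq_sym w w' : beq w w' -> beq w' w
| beq_trans w1 w2 w3 : beq w1 w2 -> beq w2 w3 -> beq w1 w3.

Definition dgen (x : gen) : gen :=
  match x with Sig i => Sig (S i) | A i => A (S i) end.
Definition dpart (w : word) : word := map (fun l => (dgen (fst l), snd l)) w.

Inductive term : Type := X | Op (t1 t2 : term).

Fixpoint tsize (t : term) : nat :=
  match t with X => 1 | Op t1 t2 => tsize t1 + tsize t2 end.

(* evaluation v(1) in B_bullet, with beta o gamma = beta . partial gamma . a_1 *)
Fixpoint eval1 (t : term) : word :=
  match t with
  | X => []
  | Op t1 t2 => eval1 t1 ++ dpart (eval1 t2) ++ g (A 0)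
  end.

(* Main.v *)
Require Import Defs.
From Stdlib Require Import List Arith Lia.
Import ListNotations.

Lemma beq_at u v w w' x y : x = u ++ w ++ v -> y = u ++ w' ++ v -> beq w w' -> beq x y.
Proof.
  intros -> -> H. induction H.
  - replace (u ++ (u0 ++ w ++ v0) ++ v) with ((u ++ u0) ++ w ++ (v0 ++ v))
      by (rewrite !app_assoc; reflexivity).
    replace (u ++ (u0 ++ w' ++ v0) ++ v) with ((u ++ u0) ++ w' ++ (v0 ++ v))
      by (rewrite !app_assoc; reflexivity).
    apply beq_step; assumption.
  - apply beq_refl.
  - apply beq_sym; assumption.
  - eapply beq_trans; eassumption.
Qed.

Lemma basic_beq w w' : basic w w' -> beq w w'.
Proof.
  intro H. pose proof (beq_step [] [] w w' H) as E.
  simpl in E. rewrite !app_nil_r in E. exact E.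
Qed.

Lemma dpart_app u v : dpart (u ++ v) = dpart u ++ dpart v.
Proof. apply map_app. Qed.

Lemma basic_dpart w w' : basic w w' -> basic (dpart w) (dpart w').
Proof.
  intro H; destruct H as [l|u v R].
  - destruct l as [x b]. apply (basic_cancel (dgen x, b)).
  - apply basic_rel. destruct R.
    + pose proof (rel_ss_far (S i) (S j) ltac:(lia)) as R; simpl in *; rewrite ?Nat.add_1_r in *; exact R.
    + pose proof (rel_as_far (S i) (S j) ltac:(lia)) as R; simpl in *; rewrite ?Nat.add_1_r in *; exact R.
    + pose proof (rel_as_low (S i) (S j) ltac:(lia)) as R; simpl in *; rewrite ?Nat.add_1_r in *; exact R.
    + pose proof (rel_aa_low (S i) (S j) ltac:(lia)) as R; simpl in *; rewrite ?Nat.add_1_r in *; exact R.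
    + pose proof (rel_braid (S i)) as R; simpl in *; rewrite ?Nat.add_1_r in *; exact R.
    + pose proof (rel_ssa (S i)) as R; simpl in *; rewrite ?Nat.add_1_r in *; exact R.
    + pose proof (rel_ssa' (S i)) as R; simpl in *; rewrite ?Nat.add_1_r in *; exact R.
Qed.

Lemma dpart_beq w w' : beq w w' -> beq (dpart w) (dpart w').
Proof.
  induction 1.
  - rewrite !dpart_app. apply beq_step, basic_dpart; assumption.
  - apply beq_refl.
  - apply beq_sym; assumption.
  - eapply beq_trans; eassumption.
Qed.

Lemma pos_letter y :
  beq [(A 0, false); (dgen y, false)] [(dgen (dgen y), false); (A 0, false)].
Proof.
  apply basic_beq, basic_rel. destruct y as [i|i]; simpl.
  - pose proof (rel_as_low (S i) 0 ltac:(lia)) as R; simpl in *; rewrite ?Nat.add_1_r in *; exact R.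
  - pose proof (rel_aa_low (S i) 0 ltac:(lia)) as R; simpl in *; rewrite ?Nat.add_1_r in *; exact R.
Qed.

Lemma one_letter y b :
  beq [(A 0, false); (dgen y, b)] [(dgen (dgen y), b); (A 0, false)].
Proof.
  destruct b; [|apply pos_letter].
  eapply beq_trans.
  { apply beq_sym.
    apply (beq_at [] [(A 0, false); (dgen y, true)] [(dgen (dgen y), true); (dgen (dgen y), false)] []);
      [reflexivity|reflexivity|].
    apply basic_beq, (basic_cancel (dgen (dgen y), true)). }
  eapply beq_trans.
  { apply (beq_at [(dgen (dgen y), true)] [(dgen y, true)]
          [(dgen (dgen y), false); (A 0, false)] [(A 0, false); (dgen y, false)]);
      [reflexivity|reflexivity|].
    apply beq_sym, pos_letter. }
  apply (beq_at [(dgen (dgen y), true); (A 0, false)] [] [(dgen y, false); (dgen y, true)] []);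
    [reflexivity|reflexivity|].
  apply basic_beq, (basic_cancel (dgen y, false)).
Qed.

Lemma L1 beta : beq (g (A 0) ++ dpart beta) (dpart (dpart beta) ++ g (A 0)).
Proof.
  induction beta as [|[x b] beta IH].
  - apply beq_refl.
  - eapply beq_trans.
    { apply (beq_at [] (dpart beta) [(A 0, false); (dgen x, b)] [(dgen (dgen x), b); (A 0, false)]);
        [reflexivity|reflexivity|apply one_letter]. }
    apply (beq_at [(dgen (dgen x), b)] [] _ _ _ _ eq_refl (eq_refl _)) in IH.
    simpl in *. rewrite !app_nil_r in IH. exact IH.
Qed.

Lemma iter_add n m (x : word) : Nat.iter (n + m) dpart x = Nat.iter n dpart (Nat.iter m dpart x).
Proof. induction n; simpl; congruence. Qed.

Theorem lemma2p7 (v : term) (p : nat) (Hp : tsize v = p) (beta : word) :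
  beq (eval1 v ++ dpart beta) (Nat.iter p dpart beta ++ eval1 v).
Proof.
  revert p Hp beta. induction v as [|t1 IH1 t2 IH2]; intros p Hp beta; subst p; simpl.
  - rewrite app_nil_r. apply beq_refl.
  - rewrite iter_add.
    set (e1 := eval1 t1) in *. set (e2 := eval1 t2) in *.
    eapply beq_trans.
    { apply (beq_at (e1 ++ dpart e2) [] (g (A 0) ++ dpart beta) (dpart (dpart beta) ++ g (A 0)));
        [rewrite app_nil_r, !app_assoc; reflexivity|reflexivity|apply L1]. }
    eapply beq_trans.
    { apply (beq_at e1 (g (A 0)) (dpart (e2 ++ dpart beta)) (dpart (Nat.iter (tsize t2) dpart beta ++ e2)));
        [rewrite app_nil_r, !dpart_app, !app_assoc; reflexivity|reflexivity|].
      apply dpart_beq, IH2; reflexivity. }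
    apply (beq_at [] (dpart e2 ++ g (A 0)) (e1 ++ dpart (Nat.iter (tsize t2) dpart beta))
                  (Nat.iter (tsize t1) dpart (Nat.iter (tsize t2) dpart beta) ++ e1));
      [rewrite !dpart_app, !app_assoc; reflexivity|rewrite !app_assoc; reflexivity|].
    apply IH1; reflexivity.
Qed.
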